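(* Let $K_f, M, B, P_m, P_f, k_{22}>0$, $B_f>0$, $I_m, I_f\ge 0$, $b_{22}\ge 0$ and $0\le\alpha\le 1$ be real numbers, and put $\mu=I_m/P_m$, $\nu=I_f/P_f$. Consider the two-port with hybrid matrix $H(s)=\begin{bmatrix} h_{11}&h_{12}\\ h_{21}&h_{22}\end{bmatrix}$ where $$h_{11}(s)=\frac{B_fMs^4+\big(B_f(B+P_m)+K_fM\big)s^3+\big(B_fI_m+K_f(B+P_m)\big)s^2+K_fI_ms}{a_4s^4+a_3s^3+a_2s^2+a_1s+a_0},$$ $$h_{12}(s)=\frac{B_fP_mP_fs^3+P_mP_f\big(K_f+B_f(\mu+\nu)\big)s^2+\big(B_fI_mI_f+K_fP_mP_f(\mu+\nu)\big)s+K_fI_mI_f}{a_4s^4+a_3s^3+a_2s^2+a_1s+a_0},$$ $h_{21}(s)=-1$, $h_{22}(s)=\dfrac{s}{b_{22}s+k_{22}}$, with $a_4=M$, $a_3=B+P_m+B_f(\alpha+P_mP_f)$, $a_2=I_m+K_f(\alpha+P_mP_f)+B_fP_mP_f(\mu+\nu)$, $a_1=B_fI_mI_f+K_fP_mP_f(\mu+\nu)$, $a_0=K_fI_mI_f$. Suppose that: the $h$-parameters have no poles in the open right half plane; any poles of the $h$-parameters on the imaginary axis are simple with real positive residues; and $\mathrm{Re}\,h_{11}(j\omega)\ge 0$ for all real $\omega$. If this two-port is absolutely stable, then $b_{22}>0$.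
   Context: This models a series damped elastic actuator (actuator inertia $M$, actuator damping $B$, physical spring $K_f$ in parallel with physical damper $B_f$) under velocity-sourced impedance control with PI motion controller gains $P_m,I_m$, PI force controller gains $P_f,I_f$, feed-forward parameter $\alpha$, and a virtual coupler consisting of a spring $k_{22}$ in parallel with a damper $b_{22}$. The hybrid matrix relates $(F_{\mathrm{int}},v_e)^T=H\,(-v_h,F_e)^T$. A two-port with hybrid matrix $H$ is called absolutely stable if (Llewellyn's criterion): (a) the $h$-parameters have no poles in the open right half plane; (b) any poles of the $h$-parameters on the imaginary axis are simple with real positive residues; (c) for all real $\omega$ (away from imaginary-axis poles), (i) $\mathrm{Re}\,h_{11}(j\omega)\ge 0$ and (ii) $2\,\mathrm{Re}\,h_{11}(j\omega)\,\mathrm{Re}\,h_{22}(j\omega)-\mathrm{Re}\big(h_{12}(j\omega)h_{21}(j\omega)\big)-\big|h_{12}(j\omega)h_{21}(j\omega)\big|\ge 0$. *)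

(* Defs.v *)
From HB Require Import structures.
From mathcomp Require Import all_boot all_order all_algebra.
From mathcomp Require Import complex.
Set Implicit Arguments. Unset Strict Implicit. Unset Printing Implicit Defensive.
Import Order.TTheory GRing.Theory Num.Theory.
Local Open Scope ring_scope.

Section Rational.
Variable R : rcfType.
Local Notation C := R[i].

(* A rational function given as numerator / denominator over C. *)
Definition ratf := ({poly C} * {poly C})%type.

Definition rnum (h : ratf) : {poly C} := h.1 %/ gcdp h.1 h.2.
Definition rden (h : ratf) : {poly C} := h.2 %/ gcdp h.1 h.2.

Definition reval (h : ratf) (s : C) : C := (rnum h).[s] / (rden h).[s].

Definition is_pole (h : ratf) (z : C) : Prop := root (rden h) z.

Definition simple_pole (h : ratf) (z : C) : Prop :=
  root (rden h) z /\ ~~ root (rden h)^`() z.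

(* Residue of h at a simple pole z : lim_{s->z} (s - z) h(s) = N(z)/D'(z). *)
Definition residue_simple (h : ratf) (z : C) : C :=
  (rnum h).[z] / ((rden h)^`()).[z].

Definition jw (w : R) : C := Complex 0 w.

Record hybrid := Hybrid { h11 : ratf; h12 : ratf; h21 : ratf; h22 : ratf }.

Definition hparams (H : hybrid) : seq ratf := [:: h11 H; h12 H; h21 H; h22 H].

Definition llew_a (H : hybrid) : Prop :=
  forall h, h \in hparams H -> forall z : C, is_pole h z -> ~ (0 < complex.Re z).

Definition llew_b (H : hybrid) : Prop :=
  forall h, h \in hparams H -> forall z : C, is_pole h z -> complex.Re z = 0 ->
    simple_pole h z /\ complex.Im (residue_simple h z) = 0
    /\ 0 < complex.Re (residue_simple h z).

Definition not_axis_pole (H : hybrid) (w : R) : Prop :=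
  forall h, h \in hparams H -> ~ is_pole h (jw w).

Definition llew_ci (H : hybrid) : Prop :=
  forall w : R, not_axis_pole H w -> 0 <= complex.Re (reval (h11 H) (jw w)).

Definition llew_cii (H : hybrid) : Prop :=
  forall w : R, not_axis_pole H w ->
    let p := reval (h12 H) (jw w) * reval (h21 H) (jw w) in
    0 <= 2 * complex.Re (reval (h11 H) (jw w)) * complex.Re (reval (h22 H) (jw w))
         - complex.Re p - complex.Re `|p|.

Definition absolutely_stable (H : hybrid) : Prop :=
  [/\ llew_a H, llew_b H, llew_ci H & llew_cii H].

Definition cst (x : R) : {poly C} := (x%:C)%C%:P.

Definition sea_hybrid (Kf M B Bf Pm Pf Im If alpha k22 b22 : R) : hybrid :=
  let mu := Im / Pm in
  let nu := If / Pf in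
  let a4 := M in
  let a3 := B + Pm + Bf * (alpha + Pm * Pf) in
  let a2 := Im + Kf * (alpha + Pm * Pf) + Bf * Pm * Pf * (mu + nu) in
  let a1 := Bf * Im * If + Kf * Pm * Pf * (mu + nu) in
  let a0 := Kf * Im * If in
  let den := cst a4 * 'X^4 + cst a3 * 'X^3 + cst a2 * 'X^2 + cst a1 * 'X + cst a0 in
  let n11 := cst (Bf * M) * 'X^4 + cst (Bf * (B + Pm) + Kf * M) * 'X^3
             + cst (Bf * Im + Kf * (B + Pm)) * 'X^2 + cst (Kf * Im) * 'X in
  let n12 := cst (Bf * Pm * Pf) * 'X^3 + cst (Pm * Pf * (Kf + Bf * (mu + nu))) * 'X^2
             + cst (Bf * Im * If + Kf * Pm * Pf * (mu + nu)) * 'X + cst (Kf * Im * If) in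
  Hybrid (n11, den) (n12, den) (- 1, 1) ('X, cst b22 * 'X + cst k22).

End Rational.

(* Main.v *)
Require Import Defs.
From HB Require Import structures.
From mathcomp Require Import all_boot all_order all_algebra.
From mathcomp Require Import complex ring lra.
Import Order.TTheory GRing.Theory Num.Theory.
Local Open Scope ring_scope.

Lemma evalN (R : rcfType) (c3 c2 c1 c0 w : R) :
  (cst c3 * 'X^3 + cst c2 * 'X^2 + cst c1 * 'X + cst c0).[jw w]
  = Complex (c0 - c2 * w^+2) (c1 * w - c3 * w^+3).
Proof.
rewrite /cst !hornerE.
by apply/eqP; rewrite eq_complex /=; apply/andP; split; apply/eqP; ring.
Qed.

Lemma evalD (R : rcfType) (c4 c3 c2 c1 c0 w : R) :
  (cst c4 * 'X^4 + cst c3 * 'X^3 + cst c2 * 'X^2 + cst c1 * 'X + cst c0).[jw w]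
  = Complex (c4 * w^+4 - c2 * w^+2 + c0) (c1 * w - c3 * w^+3).
Proof.
rewrite /cst !hornerE.
by apply/eqP; rewrite eq_complex /=; apply/andP; split; apply/eqP; ring.
Qed.

Lemma evalH22 (R : rcfType) (k w : R) : 
  complex.Re (('X).[jw w] / (cst 0 * 'X + cst k).[jw w]) = 0.
Proof.
rewrite /cst !hornerE /jw /=.
by rewrite !(mul0r, oppr0, mulr0, subr0).
Qed.

Lemma H22den {R : rcfType} (k w : R) : 0 < k -> (cst 0 * 'X + cst k).[jw w] != 0.
Proof.
move=> hk; rewrite /cst !hornerE /jw /=. 
by rewrite eq_complex /= negb_and (gt_eqF hk).
Qed.
Lemma red {R : rcfType} {N D : {poly R[i]}} {s : R[i]} : D.[s] != 0 ->
  ~~ root (rden (N, D)) s /\ reval (N, D) s = N.[s] / D.[s].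
Proof.
move=> hD.
have eD : D = rden (N, D) * gcdp N D by rewrite /rden /= divpK // dvdp_gcdr.
have eN : N = rnum (N, D) * gcdp N D by rewrite /rnum /= divpK // dvdp_gcdl.
have e : D.[s] = (rden (N, D)).[s] * (gcdp N D).[s] by rewrite {1}eD hornerM.
have eNs : N.[s] = (rnum (N, D)).[s] * (gcdp N D).[s] by rewrite {1}eN hornerM.
rewrite e mulf_eq0 negb_or in hD; case/andP: hD => h1 h2.
split; first by rewrite rootE.
rewrite /reval eNs e; field; apply/andP; split => //.
Qed.
Lemma nonroot {R : rcfType} (P : {poly R}) : P != 0 -> ~ (forall w, P.[w] = 0).
Proof.
move=> hP hall; move/eqP: hP; apply.
apply: (@roots_geq_poly_eq0 _ P (mkseq (fun i : nat => i%:R) (size P))).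
- by apply/allP => x _; rewrite rootE; exact/eqP/hall.
- by apply: mkseq_uniq => m n /eqP; rewrite eqr_nat => /eqP.
- by rewrite size_mkseq.
Qed.

Lemma main_gen (R : rcfType) (n11 : {poly R[i]}) (b3 b2 b1 b0 a4 a3 a2 a1 a0 k : R) :
  0 < k -> b3 != 0 -> a4 != 0 ->
  llew_cii (Hybrid (n11, cst a4 * 'X^4 + cst a3 * 'X^3 + cst a2 * 'X^2 + cst a1 * 'X + cst a0)
                   (cst b3 * 'X^3 + cst b2 * 'X^2 + cst b1 * 'X + cst b0,
                    cst a4 * 'X^4 + cst a3 * 'X^3 + cst a2 * 'X^2 + cst a1 * 'X + cst a0)
                   (-1, 1) ('X, cst 0 * 'X + cst k)) -> False.
Proof.
move=> hk hb3 ha4.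
set D := cst a4 * 'X^4 + _ + _ + _ + _.
set N := cst b3 * 'X^3 + _ + _ + _.
move=> hcii.
pose P : {poly R} := (- (b3 * a4))%:P * 'X^7 + (b1 * a4 + b3 * a2 - b2 * a3)%:P * 'X^5
  + (- (b1 * a2) - b3 * a0 + b0 * a3 + b2 * a1)%:P * 'X^3 + (b1 * a0 - b0 * a1)%:P * 'X.
have hP : P != 0.
  apply/eqP => /(congr1 (fun p : {poly R} => p`_7)).
  rewrite /P !coefD !coefCM !coefXn !coefX /= coef0 !mulr0 !addr0 mulr1 => /eqP.
  by rewrite oppr_eq0 mulf_eq0 (negbTE hb3) (negbTE ha4).
refine (nonroot P hP _); move=> w; apply/eqP; apply/negPn/negP => Pw.
set ReN := b0 - b2 * w^+2; set ImN := b1 * w - b3 * w^+3.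
set ReD := a4 * w^+4 - a2 * w^+2 + a0; set ImD := a1 * w - a3 * w^+3.
have ePw : P.[w] = ImN * ReD - ReN * ImD.
  rewrite /P !(hornerD, hornerCM, hornerXn, hornerX) /ImN /ReD /ReN /ImD; ring.
have eN : N.[jw w] = Complex ReN ImN by exact: evalN.
have eD : D.[jw w] = Complex ReD ImD by exact: evalD.
have hDc : D.[jw w] != 0.
  rewrite eD; apply/eqP => -[e1 e2]; move: Pw; by rewrite ePw e1 e2 !(mulr0, subr0) eqxx.
have h1 : (1 : {poly R[i]}).[jw w] != 0 by rewrite hornerC oner_eq0.
have nap : not_axis_pole (Hybrid (n11, D) (N, D) (-1, 1) ('X, cst 0 * 'X + cst k)) w.
  move=> h; rewrite !inE => /or4P[] /eqP -> /=; apply/negP.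
  - exact: (red hDc).1.
  - exact: (red hDc).1.
  - exact: (red h1).1.
  - exact: (red (H22den k w hk)).1.
move: (hcii w nap) => /=.
rewrite (red hDc).2 (red hDc).2 (red h1).2 (red (H22den k w hk)).2 evalH22 mulr0 sub0r.
rewrite hornerN !hornerC divr1 mulrN1 eN eD.
case eXY : (- _ : R[i]) => [X Y].
have eY : Y = - ((ImN * ReD - ReN * ImD) / (ReD^+2 + ImD^+2)).
  move: (congr1 (@complex.Im R) eXY) => /= <-; ring.
have hn : ReD^+2 + ImD^+2 != 0.
  apply/negP => /eqP hn0.
  have hR : ReD = 0 by apply/eqP; rewrite -sqrf_eq0; apply/eqP; nra.
  have hI : ImD = 0 by apply/eqP; rewrite -sqrf_eq0; apply/eqP; nra.
  by move: Pw; rewrite ePw hR hI !(mulr0, subr0) eqxx.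
have hY : Y != 0.
  by rewrite eY oppr_eq0 mulf_neq0 // ?invr_neq0 // -ePw.
rewrite /= => hineq.
have ht0 : 0 <= Num.sqrt (X^+2 + Y^+2) by apply: sqrtr_ge0.
have ht2 : Num.sqrt (X^+2 + Y^+2) ^+ 2 = X^+2 + Y^+2.
  by rewrite sqr_sqrtr // addr_ge0 // sqr_ge0.
have hY2 : 0 < Y^+2 by rewrite lt0r sqr_ge0 sqrf_eq0 hY.
nra.
Qed.

Theorem lemma6 (R : rcfType) (Kf M B Bf Pm Pf Im If alpha k22 b22 : R) :
  0 < Kf -> 0 < M -> 0 < B -> 0 < Pm -> 0 < Pf -> 0 < k22 -> 0 < Bf ->
  0 <= Im -> 0 <= If -> 0 <= b22 -> 0 <= alpha -> alpha <= 1 ->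
  let H := sea_hybrid Kf M B Bf Pm Pf Im If alpha k22 b22 in
  llew_a H -> llew_b H -> llew_ci H ->
  absolutely_stable H -> 0 < b22.
Proof.
move=> hKf hM hB hPm hPf hk hBf hIm hIf hb hal hal1 H _ _ _ [_ _ _ hcii].
rewrite lt0r hb andbT; apply/negP => /eqP b0.
move: hcii; rewrite /H /sea_hybrid /= b0 => hcii.
pose mu := Im / Pm; pose nu := If / Pf.
have h3 : Bf * Pm * Pf != 0 by rewrite !mulf_neq0 // gt_eqF.
have h4 : M != 0 by rewrite gt_eqF.
exact: (@main_gen R
  (cst (Bf * M) * 'X^4 + cst (Bf * (B + Pm) + Kf * M) * 'X^3
             + cst (Bf * Im + Kf * (B + Pm)) * 'X^2 + cst (Kf * Im) * 'X)
  (Bf * Pm * Pf) (Pm * Pf * (Kf + Bf * (mu + nu)))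
  (Bf * Im * If + Kf * Pm * Pf * (mu + nu)) (Kf * Im * If)
  M (B + Pm + Bf * (alpha + Pm * Pf))
  (Im + Kf * (alpha + Pm * Pf) + Bf * Pm * Pf * (mu + nu))
  (Bf * Im * If + Kf * Pm * Pf * (mu + nu)) (Kf * Im * If) k22 hk h3 h4 hcii).
Qed.
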